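(* Let $m\ge 1$, let $P_1\ge\dots\ge P_{2^m}>0$ and $P_1^d\ge\dots\ge P^d_{2^m}>0$, and let $N_i^e(t),N_i^d(t)$, $1\le i\le 2^m-1$, be positive integers. Let $\{i,i+1\}^e$ and $\{i,i+1\}^d$, $1\le i\le 2^m-1$, be events in a probability space such that $\Pr\{\{i,i+1\}^e\}=(P_{i+1}/P_i)^{N_i^e(t)}$ and $\Pr\{\{i,i+1\}^d\}=(P^d_{i+1}/P^d_i)^{N_i^d(t)}$ for all $i$, and such that each of the four families $\{\{2i-1,2i\}^e\}_{i=1}^{2^{m-1}}$, $\{\{2i,2i+1\}^e\}_{i=1}^{2^{m-1}-1}$, $\{\{2i-1,2i\}^d\}_{i=1}^{2^{m-1}}$, $\{\{2i,2i+1\}^d\}_{i=1}^{2^{m-1}-1}$ consists of mutually independent events. Let $W=\left(\bigcup_{i=1}^{2^m-1}\{i,i+1\}^e\right)\cup\left(\bigcup_{i=1}^{2^m-1}\{i,i+1\}^d\right)$ and $P_W=\Pr\{W\}$. Then $$P_W\le 4-\prod_{i=1}^{2^{m-1}}\left(1-\left(\tfrac{P_{2i}}{P_{2i-1}}\right)^{N^e_{2i-1}(t)}\right)-\prod_{i=1}^{2^{m-1}-1}\left(1-\left(\tfrac{P_{2i+1}}{P_{2i}}\right)^{N^e_{2i}(t)}\right)-\prod_{i=1}^{2^{m-1}}\left(1-\left(\tfrac{P^d_{2i}}{P^d_{2i-1}}\right)^{N^d_{2i-1}(t)}\right)-\prod_{i=1}^{2^{m-1}-1}\left(1-\left(\t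frac{P^d_{2i+1}}{P^d_{2i}}\right)^{N^d_{2i}(t)}\right).$$
   Context: Interpretation: for a rate-1 direct shaping code with parsing length $m$ whose dictionary is stable at time $t$ (encoder counts $n_1^e(t)>\dots>n^e_{2^m}(t)$ and decoder counts $n_1^d(t)>\dots>n^d_{2^m}(t)$), $N_i^e(t)=n_i^e(t)-n_{i+1}^e(t)$, $N_i^d(t)=n_i^d(t)-n_{i+1}^d(t)$; $\{i,i+1\}^e$ (resp. $\{i,i+1\}^d$) is the event that the encoder (resp. decoder) counts of the $i$th and $(i+1)$st words become equal at some future time; $P_i$ are the input word probabilities and $P_i^d=\sum_j\rho^{d(i,j)}(1-\rho)^{m-d(i,j)}P_j$ (with $d$ the Hamming distance, $\rho$ the BSC crossover probability) the decoder output probabilities. The paper treats recurrences between non-overlapping adjacent pairs as independent and uses the one-dimensional gambler's-ruin probabilities for each pair; these are stated as hypotheses in the claim. *)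

(* Defs.v *)
From HB Require Import structures.
From mathcomp Require Import all_boot all_order all_algebra.
From mathcomp Require Import all_classical all_reals all_analysis.
Set Implicit Arguments. Unset Strict Implicit. Unset Printing Implicit Defensive.
Import Order.TTheory GRing.Theory Num.Theory.
Local Open Scope classical_set_scope.
Local Open Scope ring_scope.

Definition mutually_independent {d : measure_display} {T : measurableType d}
  {R : realType} (P : probability T R) (I : set nat) (A : nat -> set T) : Prop :=
  forall s : seq nat, uniq s -> (forall j, j \in s -> I j) ->
    P (\big[setI/setT]_(j <- s) A j) = (\prod_(j <- s) P (A j))%E.

(* Main.v *)
Require Import Defs.
From HB Require Import structures.
From mathcomp Require Import all_boot all_order all_algebra.
From mathcomp Require Import all_classical all_reals all_analysis.
From mathcomp Require Import ring lra zify.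
Import Order.TTheory GRing.Theory Num.Theory.
Local Open Scope classical_set_scope.
Local Open Scope ring_scope.
Section S.
Context (d : measure_display) (T : measurableType d) (R : realType) (Pr : probability T R).
Local Open Scope ereal_scope.

Lemma compl_indep (A : nat -> set T) (I : set nat) (q : nat -> R) :
  (forall j, I j -> measurable (A j)) -> (forall j, I j -> Pr (A j) = (q j)%:E) ->
  mutually_independent Pr I A ->
  forall s t, uniq (s ++ t) -> (forall j, j \in s ++ t -> I j) ->
  Pr ((\big[setI/setT]_(j <- t) A j) `&` \big[setI/setT]_(j <- s) ~` A j) =
  ((\prod_(j <- t) q j) * \prod_(j <- s) (1 - q j))%:E.
Proof.
move=> mA PA ind; elim=> [|j s IH] t /= u Is.
  rewrite !big_nil setIT mulr1 ind //.
  rewrite (big_morph _ (@EFinM R) erefl). apply: eq_big_seq => i it.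
  by apply: PA; apply: Is.
have mt : forall t', (forall j, j \in t' -> I j) -> measurable (\big[setI/setT]_(j <- t') A j).
  move=> t' H; rewrite big_seq; apply: bigsetI_measurable => i /H; exact: mA.
have ms : measurable (\big[setI/setT]_(j <- s) ~` A j).
  rewrite big_seq; apply: bigsetI_measurable => i iS; apply: measurableC; apply: mA.
  by apply: Is; rewrite inE mem_cat iS orbT.
rewrite big_cons setICA setIC -setDE.
set B := (X in X `\` _).
have mB : measurable B.
  apply: measurableI => //; apply: mt => i it; apply: Is; by rewrite inE mem_cat it !orbT.
have mD : Pr (B `\` A j) = Pr B - Pr (B `&` A j).
  apply: measureD => //.
  - by apply: mA; apply: Is; rewrite inE eqxx.
  - by rewrite (le_lt_trans (probability_le1 _ _)) ?ltey.
rewrite mD {mD mB} /B.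
move: u; rewrite mem_cat negb_or => /andP[/andP[js jt] u].
rewrite (IH t) //; last by move=> i H; apply: Is; rewrite inE H orbT.
have -> : (\big[setI/setT]_(j0 <- t) A j0 `&` \big[setI/setT]_(j0 <- s) ~` A j0) `&` A j
   = (\big[setI/setT]_(j0 <- j :: t) A j0 `&` \big[setI/setT]_(j0 <- s) ~` A j0).
  by rewrite big_cons setIAC (setIC (A j)).
rewrite IH; last first.
- move=> i; rewrite mem_cat inE => /or3P[H|/eqP->|H]; apply: Is;
  by rewrite ?inE ?mem_cat ?H ?eqxx ?orbT.
- rewrite (perm_uniq (_ : perm_eq _ (j :: s ++ t))) /=; first by rewrite mem_cat negb_or js jt u.
  by rewrite (perm_catCA s [:: j] t).
rewrite -EFinB !big_cons; congr (_%:E); ring.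
Qed.

Lemma union_indep (A : nat -> set T) (I : set nat) (q : nat -> R) :
  (forall j, I j -> measurable (A j)) -> (forall j, I j -> Pr (A j) = (q j)%:E) ->
  mutually_independent Pr I A ->
  forall s, uniq s -> (forall j, j \in s -> I j) ->
  Pr (\big[setU/set0]_(j <- s) A j) = (1 - \prod_(j <- s) (1 - q j))%:E.
Proof.
move=> mA PA ind s us Is.
have -> : \big[setU/set0]_(j <- s) A j = ~` \big[setI/setT]_(j <- s) ~` A j.
  elim: (s) => [|j s' IH]; first by rewrite !big_nil setCT.
  by rewrite !big_cons IH setCI setCK.
rewrite probability_setC; last first.
  rewrite big_seq; apply: bigsetI_measurable => i iS; apply: measurableC; exact/mA/Is.
have := @compl_indep A I q mA PA ind s [::].
rewrite cats0 !big_nil setTI mul1r => ->//.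
Qed.

Lemma mem_bigU (F : nat -> set T) (s : seq nat) x :
  (\big[setU/set0]_(i <- s) F i) x <-> exists2 i, i \in s & F i x.
Proof.
elim: s => [|j s IH]; first by rewrite big_nil; split=> // -[].
rewrite big_cons; split.
  case=> [H|/IH[i iS H]]; first by exists j; rewrite ?inE ?eqxx.
  by exists i; rewrite // inE iS orbT.
case=> i; rewrite inE => /orP[/eqP->|iS] H; [by left | right; apply/IH; by exists i].
Qed.
End S.
Theorem lemma2 (d : measure_display) (T : measurableType d) (R : realType)
  (Pr : probability T R) (m : nat)
  (Pw Pd : nat -> R) (Ne Nd : nat -> nat) (Ee Ed : nat -> set T) :
  (1 <= m)%N ->
  (forall i, (1 <= i < 2 ^ m)%N -> Pw i.+1 <= Pw i) ->
  (forall i, (1 <= i <= 2 ^ m)%N -> 0 < Pw i) ->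
  (forall i, (1 <= i < 2 ^ m)%N -> Pd i.+1 <= Pd i) ->
  (forall i, (1 <= i <= 2 ^ m)%N -> 0 < Pd i) ->
  (forall i, (1 <= i < 2 ^ m)%N -> (0 < Ne i)%N) ->
  (forall i, (1 <= i < 2 ^ m)%N -> (0 < Nd i)%N) ->
  (forall i, (1 <= i < 2 ^ m)%N -> measurable (Ee i)) ->
  (forall i, (1 <= i < 2 ^ m)%N -> measurable (Ed i)) ->
  (forall i, (1 <= i < 2 ^ m)%N ->
     Pr (Ee i) = ((Pw i.+1 / Pw i) ^+ Ne i)%:E) ->
  (forall i, (1 <= i < 2 ^ m)%N ->
     Pr (Ed i) = ((Pd i.+1 / Pd i) ^+ Nd i)%:E) ->
  mutually_independent Pr [set i | (1 <= i <= 2 ^ m.-1)%N]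
    (fun i => Ee (2 * i)%N.-1) ->
  mutually_independent Pr [set i | (1 <= i < 2 ^ m.-1)%N]
    (fun i => Ee (2 * i)%N) ->
  mutually_independent Pr [set i | (1 <= i <= 2 ^ m.-1)%N]
    (fun i => Ed (2 * i)%N.-1) ->
  mutually_independent Pr [set i | (1 <= i < 2 ^ m.-1)%N]
    (fun i => Ed (2 * i)%N) ->
  (Pr ((\big[setU/set0]_(1 <= i < 2 ^ m) Ee i)
      `|` (\big[setU/set0]_(1 <= i < 2 ^ m) Ed i)) <=
  (4 - \prod_(1 <= i < (2 ^ m.-1).+1) (1 - (Pw (2 * i)%N / Pw (2 * i)%N.-1) ^+ Ne (2 * i)%N.-1)
     - \prod_(1 <= i < 2 ^ m.-1) (1 - (Pw (2 * i)%N.+1 / Pw (2 * i)%N) ^+ Ne (2 * i)%N)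
     - \prod_(1 <= i < (2 ^ m.-1).+1) (1 - (Pd (2 * i)%N / Pd (2 * i)%N.-1) ^+ Nd (2 * i)%N.-1)
     - \prod_(1 <= i < 2 ^ m.-1) (1 - (Pd (2 * i)%N.+1 / Pd (2 * i)%N) ^+ Nd (2 * i)%N))%:E)%E.
Proof.
move=> m1 _ _ _ _ _ _ mEe mEd PEe PEd iEo iEe iDo iDe.
set M := (2 ^ m.-1)%N.
have eM : (2 ^ m = 2 * M)%N by rewrite /M -expnS prednK.
have M1 : (1 <= M)%N by rewrite /M expn_gt0.
have key : forall (E : nat -> set T) (P : nat -> R) (N : nat -> nat),
  (forall i, (1 <= i < 2 ^ m)%N -> measurable (E i)) ->
  (forall i, (1 <= i < 2 ^ m)%N -> Pr (E i) = ((P i.+1 / P i) ^+ N i)%:E) ->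
  mutually_independent Pr [set i | (1 <= i <= M)%N] (fun i => E (2 * i)%N.-1) ->
  mutually_independent Pr [set i | (1 <= i < M)%N] (fun i => E (2 * i)%N) ->
  measurable (\big[setU/set0]_(1 <= i < 2 ^ m) E i) /\
   measurable (\big[setU/set0]_(i <- index_iota 1 M.+1) E (2 * i)%N.-1) /\
   measurable (\big[setU/set0]_(i <- index_iota 1 M) E (2 * i)%N) /\
   \big[setU/set0]_(1 <= i < 2 ^ m) E i `<=`
     (\big[setU/set0]_(i <- index_iota 1 M.+1) E (2 * i)%N.-1) `|`
     (\big[setU/set0]_(i <- index_iota 1 M) E (2 * i)%N) /\
   Pr (\big[setU/set0]_(i <- index_iota 1 M.+1) E (2 * i)%N.-1) =
     (1 - \prod_(1 <= i < M.+1) (1 - (P (2 * i)%N / P (2 * i)%N.-1) ^+ N (2 * i)%N.-1))%:E /\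
   Pr (\big[setU/set0]_(i <- index_iota 1 M) E (2 * i)%N) =
     (1 - \prod_(1 <= i < M) (1 - (P (2 * i)%N.+1 / P (2 * i)%N) ^+ N (2 * i)%N))%:E.
  move=> E P N mE PE io ie; split; [|split; [|split; [|split; [|split]]]].
  - rewrite big_seq; apply: bigsetU_measurable => i; rewrite mem_index_iota => H; exact: mE.
  - rewrite big_seq; apply: bigsetU_measurable => i; rewrite mem_index_iota => H.
    apply: mE; lia.
  - rewrite big_seq; apply: bigsetU_measurable => i; rewrite mem_index_iota => H.
    apply: mE; lia.
  - move=> x /mem_bigU[i]; rewrite mem_index_iota => H Ex.
    case: (boolP (i %% 2 == 1)%N) => Ho.
      left; apply/mem_bigU; exists (i.+1 %/ 2)%N; first by rewrite mem_index_iota; lia.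
      have -> : ((2 * (i.+1 %/ 2)).-1 = i)%N by lia.
      by [].
    right; apply/mem_bigU; exists (i %/ 2)%N; first by rewrite mem_index_iota; lia.
    have -> : ((2 * (i %/ 2)) = i)%N by lia.
    by [].
  - apply: (@union_indep _ _ _ Pr _ _ _ _ _ io); last first.
    + by move=> j; rewrite mem_index_iota.
    + exact: iota_uniq.
    + move=> j /= H; rewrite PE; last by lia.
      by rewrite prednK //; lia.
    + move=> j /= H; apply: mE; lia.
  - apply: (@union_indep _ _ _ Pr _ _ _ _ _ ie); last first.
    + by move=> j; rewrite mem_index_iota.
    + exact: iota_uniq.
    + move=> j /= H; rewrite PE //; lia.
    + move=> j /= H; apply: mE; lia.
have [mE1 [mE2 [mE3 [sE [PE2 PE3]]]]] := key _ _ _ mEe PEe iEo iEe.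
have [mD1 [mD2 [mD3 [sD [PD2 PD3]]]]] := key _ _ _ mEd PEd iDo iDe.
have sub := setUSS sE sD.
apply: (le_trans (le_measure _ _ _ sub)).
- by rewrite inE; apply: measurableU.
- by rewrite inE; apply: measurableU; apply: measurableU.
have U2 : forall A B, measurable A -> measurable B -> (Pr (A `|` B) <= Pr A + Pr B)%E.
  by move=> A B mA mB; exact: measureU2.
apply: (le_trans (U2 _ _ _ _)); [exact: measurableU|exact: measurableU|].
apply: (le_trans (leeD (U2 _ _ _ _) (U2 _ _ _ _))) => //.
rewrite PE2 PE3 PD2 PD3 -!EFinD lee_fin.
rewrite le_eqVlt; apply/orP; left; apply/eqP; rewrite /M; ring.
Qed.
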